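(* Let $\mathcal{Y}=\sum_{k=1}^r\alpha_k\bigcirc_{\ell=1}^d\mathbf{y}^{(\ell)}_k\in\mathbb{C}^{n_1\times\cdots\times n_d}$ be a rank-$r$ tensor in standard form with basis coherence $\mu'_{\mathcal{Y}}<(r-1)^{-1}$. Then $$\|\boldsymbol\alpha\|_2^2\le\frac{1}{1-(r-1)\mu'_{\mathcal{Y}}}\|\mathcal{Y}\|^2\le\frac{1}{1-(r-1)\prod_{\ell=1}^d\mu_{\mathcal{Y},\ell}}\|\mathcal{Y}\|^2\le\frac{1}{1-(r-1)\mu_{\mathcal{Y}}^d}\|\mathcal{Y}\|^2 .$$
   Context: Tensors carry the inner product $\langle\mathcal{X},\mathcal{Y}\rangle=\sum\mathcal{X}_{i_1\dots i_d}\overline{\mathcal{Y}_{i_1\dots i_d}}$ and norm $\|\cdot\|$; $\bigcirc$ is the outer product. Standard form: $\|\mathbf{y}^{(\ell)}_k\|_2=1$ for all $\ell,k$; $\boldsymbol\alpha=(\alpha_k)_{k\in[r]}$. Relative to this representation, $\mu_{\mathcal{Y},\ell}=\max_{k\ne h}|\langle\mathbf{y}^{(\ell)}_k,\mathbf{y}^{(\ell)}_h\rangle|$, $\mu_{\mathcal{Y}}=\max_\ell\mu_{\mathcal{Y},\ell}$, and $\mu'_{\mathcal{Y}}=\max_{k\ne h}\prod_{\ell=1}^d|\langle\mathbf{y}^{(\ell)}_k,\mathbf{y}^{(\ell)}_h\rangle|$. *)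

(* Defs.v *)
From HB Require Import structures.
From mathcomp Require Import all_boot all_order all_algebra.
Set Implicit Arguments. Unset Strict Implicit. Unset Printing Implicit Defensive.
Import Order.TTheory GRing.Theory Num.Theory.
Local Open Scope ring_scope.

(* C : numClosedFieldType plays the role of the complex
   numbers (it includes the complex numbers; conjugation is Num.conj). *)

Section Tensors.
Variable C : numClosedFieldType.

Definition vdot (m : nat) (x y : 'I_m -> C) : C :=
  \sum_(j < m) x j * Num.conj (y j).

Definition multi_index (d : nat) (n : 'I_d -> nat) : finType :=
  {dffun forall l : 'I_d, 'I_(n l)}.

Definition tensor (d : nat) (n : 'I_d -> nat) := multi_index n -> C.

Definition tdot (d : nat) (n : 'I_d -> nat) (X Y : tensor n) : C :=
  \sum_(i : multi_index n) X i * Num.conj (Y i).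

Definition tnorm2 (d : nat) (n : 'I_d -> nat) (X : tensor n) : C := tdot X X.

Definition cpd (d : nat) (n : 'I_d -> nat) (r : nat) (alpha : 'I_r -> C)
  (y : forall l : 'I_d, 'I_r -> 'I_(n l) -> C) : tensor n :=
  fun i => \sum_(k < r) alpha k * \prod_(l < d) y l k (i l).

Definition has_cpd (d : nat) (n : 'I_d -> nat) (Y : tensor n) (s : nat) : Prop :=
  exists (beta : 'I_s -> C) (z : forall l : 'I_d, 'I_s -> 'I_(n l) -> C),
    forall i, Y i = cpd beta z i.

Definition tensor_rank_eq (d : nat) (n : 'I_d -> nat) (Y : tensor n) (r : nat) : Prop :=
  has_cpd Y r /\ forall s, (s < r)%N -> ~ has_cpd Y s.

Definition standard_form (d : nat) (n : 'I_d -> nat) (r : nat)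
  (y : forall l : 'I_d, 'I_r -> 'I_(n l) -> C) : Prop :=
  forall (l : 'I_d) (k : 'I_r), vdot (y l k) (y l k) = 1.

Definition vnorm2 (r : nat) (alpha : 'I_r -> C) : C := vdot alpha alpha.

(* mu_{Y,l} = max_{k<>h} |<y^{(l)}_k, y^{(l)}_h>|  (0 if r <= 1). *)
Definition mu_l (d : nat) (n : 'I_d -> nat) (r : nat)
  (y : forall l : 'I_d, 'I_r -> 'I_(n l) -> C) (l : 'I_d) : C :=
  \big[Num.max/0]_(k < r) \big[Num.max/0]_(h < r | h != k)
     `|vdot (y l k) (y l h)|.

(* mu_Y = max_l mu_{Y,l}  (0 if d = 0). *)
Definition mu (d : nat) (n : 'I_d -> nat) (r : nat)
  (y : forall l : 'I_d, 'I_r -> 'I_(n l) -> C) : C :=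
  \big[Num.max/0]_(l < d) mu_l y l.

(* mu'_Y = max_{k<>h} prod_l |<y^{(l)}_k, y^{(l)}_h>|  (0 if r <= 1). *)
Definition mu' (d : nat) (n : 'I_d -> nat) (r : nat)
  (y : forall l : 'I_d, 'I_r -> 'I_(n l) -> C) : C :=
  \big[Num.max/0]_(k < r) \big[Num.max/0]_(h < r | h != k)
     \prod_(l < d) `|vdot (y l k) (y l h)|.

End Tensors.

(* Main.v *)
Require Import Defs.
From HB Require Import structures.
From mathcomp Require Import all_boot all_order all_algebra ring.
Import Order.TTheory GRing.Theory Num.Theory.
Local Open Scope ring_scope.

Lemma prod_sum_dep (R : comRingType) (d : nat) (n : 'I_d -> nat)
  (P : forall l : 'I_d, 'I_(n l) -> R) :
  \prod_(l < d) \sum_(j < n l) P l j =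
  \sum_(i : multi_index n) \prod_(l < d) P l (i l).
Proof.
pose Q := fun l : 'I_d => [ffun j : 'I_(n l) => P l j].
transitivity (\prod_(l < d) \sum_(j in tagged_with (fun l : 'I_d => ('I_(n l) : finType)) l)
                  untag 0 (Q l) j).
  apply: eq_bigr => l _; rewrite -(big_tag (fun l j => Q l j)); apply: eq_bigr => j _; by rewrite ffunE.
rewrite bigA_distr_big_dep.
rewrite -(big_fprod 1 +%R Q).
rewrite (reindex (@fprod_of_dffun _ (fun l : 'I_d => ('I_(n l) : finType)))); last first.
  by apply: onW_bij; apply: fprod_of_dffun_bij.
apply: eq_bigr => i _; apply: eq_bigr => l _.
by rewrite /fprod_of_dffun fprodE ffunE.
Qed.
Section Mx.
Variable R : numDomainType.
Implicit Types x y c : R.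

Lemma max_real x y : x \is Num.real -> y \is Num.real -> Num.max x y \is Num.real.
Proof. by move=> hx hy; rewrite /Num.max /Order.max; case: ifP. Qed.

Lemma max_gel x y : x <= Num.max x y.
Proof. by rewrite /Num.max /Order.max; case: ifP => // /ltW. Qed.

Lemma max_ger x y : x \is Num.real -> y \is Num.real -> y <= Num.max x y.
Proof.
move=> hx hy; rewrite /Num.max /Order.max; case: ifP => // /negbT.
by rewrite real_leNgt.
Qed.

Lemma max_le x y c : x <= c -> y <= c -> Num.max x y <= c.
Proof. by rewrite /Num.max /Order.max; case: ifP. Qed.

Lemma bigmax_props (I : eqType) (s : seq I) (P : pred I) (F : I -> R) :
  (forall i, P i -> F i \is Num.real) ->
  [/\ \big[Num.max/0]_(i <- s | P i) F i \is Num.real,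
      0 <= \big[Num.max/0]_(i <- s | P i) F i &
      forall i, i \in s -> P i -> F i <= \big[Num.max/0]_(i <- s | P i) F i].
Proof.
move=> hR; elim: s => [|a s [IH1 IH2 IH3]]; first by rewrite big_nil.
rewrite big_cons; case: ifP => Pa; last first.
  by split=> // i; rewrite inE => /orP[/eqP->|]; [rewrite Pa | exact: IH3].
split; first exact: max_real (hR _ Pa) IH1.
  apply: le_trans IH2 _; apply: max_ger => //; exact: hR.
move=> i; rewrite inE => /orP[/eqP-> _|iis Pi]; first exact: max_gel.
apply: le_trans (IH3 _ iis Pi) _; apply: max_ger => //; exact: hR.
Qed.

Lemma bigmax_le (I : Type) (s : seq I) (P : pred I) (F : I -> R) c :
  0 <= c -> (forall i, P i -> F i <= c) -> \big[Num.max/0]_(i <- s | P i) F i <= c.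
Proof.
move=> c0 hF; elim/big_rec: _ => // i x Pi xc; exact: max_le (hF _ Pi) xc.
Qed.

Lemma offdiag_bound r (x : 'I_r -> R) : (forall k, 0 <= x k) ->
  \sum_k \sum_(h | h != k) x k * x h <= r.-1%:R * \sum_k x k ^+ 2.
Proof.
move=> x0; case: r x x0 => [|r] x x0; first by rewrite !big_ord0 mulr0.
have xr k : x k \is Num.real by rewrite ger0_real.
rewrite -(ler_pMn2r (n := 2)) //.
apply: (@le_trans _ _ (\sum_(k < r.+1) \sum_(h | h != k) (x k ^+ 2 + x h ^+ 2))).
  rewrite -sumrMnl; apply: ler_sum => k _; rewrite -sumrMnl; apply: ler_sum => h _.
  exact: (real_leif_mean_square_scaled (xr k) (xr h)).
have e k : \sum_(h < r.+1 | h != k) (x k ^+ 2 + x h ^+ 2) =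
    r%:R * x k ^+ 2 + (\sum_h x h ^+ 2 - x k ^+ 2).
  rewrite big_split /= (bigD1 k (P:=predT)) //= (addrC (x k ^+ 2)) addrK; congr (_ + _).
  rewrite sumr_const; have -> : #|[pred h : 'I_r.+1 | h != k]| = r.
    by rewrite cardC1 card_ord.
  by rewrite mulr_natl.
under eq_bigr do rewrite e.
rewrite big_split /= -mulr_sumr sumrB /= sumr_const card_ord.
rewrite le_eqVlt; apply/orP; left; apply/eqP.
set S := \sum_(i < r.+1) x i ^+ 2; rewrite mulrSr addrK mulr2n -mulr_natl; ring.
Qed.
End Mx.
Arguments bigmax_props {R I}.
Arguments bigmax_le {R I}.
Arguments offdiag_bound {R r}.

Section Main.
Variable C : numClosedFieldType.

Lemma tnorm2_expand d (n : 'I_d -> nat) r (a : 'I_r -> C)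
  (y : forall l : 'I_d, 'I_r -> 'I_(n l) -> C) :
  tnorm2 (cpd a y) = \sum_k \sum_h a k * (a h)^* * \prod_(l < d) vdot (y l k) (y l h).
Proof.
rewrite /tnorm2 /tdot /cpd.
under eq_bigr do rewrite rmorph_sum mulr_suml; rewrite exchange_big /=.
apply: eq_bigr => k _.
under eq_bigr do rewrite mulr_sumr; rewrite exchange_big /=.
apply: eq_bigr => h _.
rewrite /vdot prod_sum_dep mulr_sumr; apply: eq_bigr => i _.
rewrite big_split /= rmorphM rmorph_prod /=; ring.
Qed.

Lemma vnorm2_ge0 {r} (a : 'I_r -> C) : 0 <= vnorm2 a.
Proof. by apply: sumr_ge0 => k _; exact: mul_conjC_ge0. Qed.

Lemma tnorm2_ge0 {d} (n : 'I_d -> nat) (X : tensor C n) : 0 <= tnorm2 X.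
Proof. by apply: sumr_ge0 => k _; exact: mul_conjC_ge0. Qed.


Lemma bigmax2_ge0 r (g : 'I_r -> 'I_r -> C) : (forall k h, g k h \is Num.real) ->
  0 <= \big[Num.max/0]_(k < r) \big[Num.max/0]_(h < r | h != k) g k h.
Proof.
move=> gr.
have inner k := bigmax_props (index_enum 'I_r) (fun h => h != k) (g k) (fun h _ => gr k h).
have [_ H _] := bigmax_props (index_enum 'I_r) predT
   (fun k => \big[Num.max/0]_(h <- index_enum 'I_r | h != k) g k h)
   (fun k _ => let: And3 a _ _ := inner k in a).
exact: H.
Qed.

Lemma bigmax2_ge r (g : 'I_r -> 'I_r -> C) : (forall k h, g k h \is Num.real) ->
  forall k h, h != k ->
  g k h <= \big[Num.max/0]_(k < r) \big[Num.max/0]_(h < r | h != k) g k h.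
Proof.
move=> gr k h hk.
have inner k' := bigmax_props (index_enum 'I_r) (fun h => h != k') (g k') (fun h _ => gr k' h).
have [_ _ H] := bigmax_props (index_enum 'I_r) predT
   (fun k => \big[Num.max/0]_(h <- index_enum 'I_r | h != k) g k h)
   (fun k _ => let: And3 a _ _ := inner k in a).
have [_ _ H'] := inner k.
apply: le_trans (H' h (mem_index_enum _) hk) _.
exact: (H k (mem_index_enum _) isT).
Qed.

Lemma inv_step (a b T : C) : 0 <= T -> 0 < 1 - b -> a <= b ->
  (1 - a)^-1 * T <= (1 - b)^-1 * T.
Proof.
move=> T0 hb hab.
have hba : 1 - b <= 1 - a by rewrite lerD2l lerN2.
have ha : 0 < 1 - a := lt_le_trans hb hba.
apply: ler_wpM2r => //.
by rewrite lef_pV2 ?posrE.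
Qed.

End Main.
Arguments tnorm2_ge0 {C d n}.
Arguments vnorm2_ge0 {C r}.
Arguments bigmax2_ge {C r g}.
Arguments bigmax2_ge0 {C r g}.
Arguments inv_step {C a b T}.
Arguments tnorm2_expand {C d n r}.

Theorem lemma9 (C : numClosedFieldType) (d : nat) (n : 'I_d -> nat) (r : nat)
  (alpha : 'I_r -> C) (y : forall l : 'I_d, 'I_r -> 'I_(n l) -> C) :
  tensor_rank_eq (cpd alpha y) r ->
  standard_form y ->
  (r.-1)%:R * mu' y < 1 ->
  [/\ vnorm2 alpha <= (1 - (r.-1)%:R * mu' y)^-1 * tnorm2 (cpd alpha y),
      0 < 1 - (r.-1)%:R * \prod_(l < d) mu_l y l ->
        (1 - (r.-1)%:R * mu' y)^-1 * tnorm2 (cpd alpha y)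
          <= (1 - (r.-1)%:R * \prod_(l < d) mu_l y l)^-1 * tnorm2 (cpd alpha y)
    & 0 < 1 - (r.-1)%:R * mu y ^+ d ->
        (1 - (r.-1)%:R * \prod_(l < d) mu_l y l)^-1 * tnorm2 (cpd alpha y)
          <= (1 - (r.-1)%:R * mu y ^+ d)^-1 * tnorm2 (cpd alpha y)].
Proof.
move=> _ hsf hm.
have T0 := tnorm2_ge0 (cpd alpha y : tensor C n).
have vreal l k h : `|vdot (y l k) (y l h)| \is Num.real by apply: ger0_real.
pose f k h := \prod_(l < d) `|vdot (y l k) (y l h)|.
have freal k h : f k h \is Num.real by apply/ger0_real/prodr_ge0.
have fle k h : h != k -> f k h <= mu' y := bigmax2_ge freal k h.
have m0 : 0 <= mu' y := bigmax2_ge0 freal.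
have mul0 l : 0 <= mu_l y l := @bigmax2_ge0 C r (fun k h => `|vdot (y l k) (y l h)|) (vreal l).
have P0 : 0 <= \prod_(l < d) mu_l y l by apply: prodr_ge0.
have mP : mu' y <= \prod_(l < d) mu_l y l.
  apply: bigmax_le => // k _; apply: bigmax_le => // h hk.
  apply: ler_prod => l _; rewrite normr_ge0 /=.
  exact: (@bigmax2_ge C r (fun k h => `|vdot (y l k) (y l h)|) (vreal l) k h hk).
have Pmu : \prod_(l < d) mu_l y l <= mu y ^+ d.
  rewrite -[d in mu y ^+ d]card_ord -prodr_const.
  apply: ler_prod => l _; rewrite mul0 /=.
  have [_ _ H] := bigmax_props (index_enum 'I_d) predT (mu_l y) (fun l _ => ger0_real (mul0 l)).
  exact: (H l (mem_index_enum _) isT).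
have r0 : 0 <= (r.-1)%:R :> C := ler0n _ _.
split; last first.
- move=> h; apply: inv_step => //; exact: ler_wpM2l.
- move=> h; apply: inv_step => //; exact: ler_wpM2l.
set T := tnorm2 (cpd alpha y).
set A := vnorm2 alpha.
set E := \sum_k \sum_(h | h != k) alpha k * (alpha h)^* * \prod_(l < d) vdot (y l k) (y l h).
have TAE : T = A + E.
  rewrite /T tnorm2_expand /A /vnorm2 /vdot /E -big_split /=.
  apply: eq_bigr => k _; rewrite (bigD1 k) //=; congr (_ + _).
  by rewrite big1 ?mulr1 // => l _; exact: hsf.
have A0 : 0 <= A := vnorm2_ge0 alpha.
have Ereal : E \is Num.real.
  have -> : E = T - A by rewrite TAE addrC addKr.
  by apply: rpredB; apply: ger0_real.
have Ale : `|E| <= (r.-1)%:R * mu' y * A.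
  apply: le_trans (ler_norm_sum _ _ _) _.
  apply: (@le_trans _ _ (\sum_k \sum_(h | h != k) (`|alpha k| * `|alpha h|) * mu' y)).
    apply: ler_sum => k _; apply: le_trans (ler_norm_sum _ _ _) _.
    apply: ler_sum => h hk.
    rewrite !normrM norm_conjC normr_prod.
    by apply: ler_wpM2l; [rewrite mulr_ge0 | exact: fle].
  under eq_bigr do rewrite -mulr_suml.
  rewrite -mulr_suml mulrC [_ * mu' y]mulrC -mulrA; apply: ler_wpM2l => //.
  have -> : A = \sum_k `|alpha k| ^+ 2.
    by rewrite /A /vnorm2 /vdot; apply: eq_bigr => k _; rewrite normCK.
  by apply: offdiag_bound.
rewrite ler_pdivlMl ?subr_gt0 // mulrBl mul1r TAE lerD2l lerNl.
apply: (le_trans _ Ale); rewrite -normrN; apply: real_ler_norm; by rewrite rpredN.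
Qed.
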